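(* Let $\mathcal{S}\subseteq\mathcal{L}$ and let $\mathcal{AF}_{\vdash}=(\vdash,\overline{\cdot},\mathsf{id})$ be contrapositable with $\vdash$ satisfying Cut. Then the grounded extension of $\mathcal{AF}_{\mathsf{con}}(\mathcal{S})$ equals $\mathit{Arg}_{\vdash}\left(\bigcap\mathsf{MCS}(\mathcal{AF}_{\vdash}(\mathcal{S}))\right)$.
   Context: $\mathcal{L}$ is a set of formulas; ${\vdash}\subseteq\wp_{\sf fin}(\mathcal{L})\times\mathcal{L}$ is arbitrary and $\overline{\cdot}:\mathcal{L}\to\wp(\mathcal{L})$. $\mathit{Arg}_{\vdash'}(\mathcal{S})=\{(\Gamma,\gamma):\Gamma\subseteq\mathcal{S}\text{ finite},\Gamma\vdash'\gamma\}$; in $\mathcal{AF}_{\vdash'}(\mathcal{S})$, $(\Gamma,\gamma)$ attacks $(\Gamma',\gamma')$ iff $\gamma\in\overline{\lambda}$ for some $\lambda\in\Gamma'$. The grounded extension is the $\subseteq$-minimal complete extension (complete = conflict-free, defends every member, and contains every argument it defends). $\vdash^{+\phi}$ is the transitive closure of ${\vdash}\cup\{(\emptyset,\phi)\}$; Cut: for every $\phi$ and finite $\Gamma,\Delta$, if $\Gamma\vdash\phi$ and $\Delta\vdash^{+\phi}\gamma$ then $\Gamma\cup\Delta\vdash\gamma$. Contrapositable: for all finite $\Theta$, if $\Theta\vdash\gamma'$ with $\gamma'\in\overline{\gamma}$, then for every $\sigma\in\Theta$, $(\Theta\cup\{\gamma\})\setminus\{\sigma\}\vdash\sigma'$ for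 some $\sigma'\in\overline{\sigma}$. $\Theta\subseteq\mathcal{S}$ is $\mathcal{AF}_{\vdash}(\mathcal{S})$-inconsistent iff there are $\Theta'\subseteq\Theta$ and $\gamma\in\Theta'$ with $\Theta'\setminus\{\gamma\}\vdash\gamma'$ for some $\gamma'\in\overline{\gamma}$, consistent otherwise; $\mathsf{MCS}(\mathcal{AF}_{\vdash}(\mathcal{S}))$ is the set of maximal consistent subsets of $\mathcal{S}$. $\vdash_{\mathsf{con}}=\{(\Gamma,\gamma):\Gamma\vdash\gamma,\ \Gamma\text{ consistent}\}$ and $\mathcal{AF}_{\mathsf{con}}(\mathcal{S})=\mathcal{AF}_{\vdash_{\mathsf{con}}}(\mathcal{S})$. *)

(* Defs.v *)
From mathcomp Require Import all_boot.
From mathcomp Require Import boolp classical_sets cardinality.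
Set Implicit Arguments. Unset Strict Implicit. Unset Printing Implicit Defensive.
Local Open Scope classical_set_scope.

Definition argument (L : Type) := (set L * L)%type.

Definition Arg (L : Type) (d : set L -> L -> Prop) (S : set L) : set (argument L) :=
  [set a | finite_set a.1 /\ a.1 `<=` S /\ d a.1 a.2].

Definition attacks (L : Type) (ctr : L -> set L) (a b : argument L) : Prop :=
  exists lam, b.1 lam /\ ctr lam a.2.

Definition conflict_free (L : Type) (ctr : L -> set L) (E : set (argument L)) :=
  forall a b, E a -> E b -> ~ attacks ctr a b.

Definition defends (L : Type) (ctr : L -> set L) (A E : set (argument L))
  (a : argument L) :=
  forall b, A b -> attacks ctr b a -> exists2 c, E c & attacks ctr c b.

Definition complete_ext (L : Type) (ctr : L -> set L) (A E : set (argument L)) :=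
  [/\ E `<=` A, conflict_free ctr E,
      (forall a, E a -> defends ctr A E a)
    & (forall a, A a -> defends ctr A E a -> E a)].

Definition grounded_ext (L : Type) (ctr : L -> set L) (A E : set (argument L)) :=
  complete_ext ctr A E /\
  forall E', complete_ext ctr A E' -> E' `<=` E -> E' = E.

Definition inconsistent (L : Type) (d : set L -> L -> Prop) (ctr : L -> set L)
  (T : set L) :=
  exists T', exists g, exists g',
    [/\ T' `<=` T, T' g, ctr g g' & d (T' `\ g) g'].

Definition consistent (L : Type) (d : set L -> L -> Prop) (ctr : L -> set L)
  (T : set L) := ~ inconsistent d ctr T.

Definition MCS (L : Type) (d : set L -> L -> Prop) (ctr : L -> set L) (S : set L)
  : set (set L) :=
  [set M | [/\ M `<=` S, consistent d ctr M &
     forall M', M `<=` M' -> M' `<=` S -> consistent d ctr M' -> M' = M]].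

Definition bigcap_MCS (L : Type) (d : set L -> L -> Prop) (ctr : L -> set L)
  (S : set L) : set L :=
  [set x | forall M, MCS d ctr S M -> M x].

Definition vdash_con (L : Type) (d : set L -> L -> Prop) (ctr : L -> set L)
  : set L -> L -> Prop :=
  fun G g => d G g /\ consistent d ctr G.

(* ⊢^{+φ}: transitive closure of ⊢ ∪ {(∅, φ)}:
   closed under  G ⊢ δ, (D ∪ {δ}) ⊢ γ  ==>  (G ∪ D) ⊢ γ. *)
Inductive vdash_plus (L : Type) (d : set L -> L -> Prop) (phi : L)
  : set L -> L -> Prop :=
| vp_base G g : d G g -> vdash_plus d phi G g
| vp_phi : vdash_plus d phi set0 phi
| vp_trans G D dl g :
    vdash_plus d phi G dl -> vdash_plus d phi (D `|` [set dl]) g ->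
    vdash_plus d phi (G `|` D) g.

Definition satisfies_cut (L : Type) (d : set L -> L -> Prop) :=
  forall phi G D g, finite_set G -> finite_set D ->
    d G phi -> vdash_plus d phi D g -> d (G `|` D) g.

Definition contrapositable (L : Type) (d : set L -> L -> Prop) (ctr : L -> set L) :=
  forall (T : set L) g g', finite_set T -> d T g' -> ctr g g' ->
    forall s, T s -> exists2 s', ctr s s' & d ((T `|` [set g]) `\ s) s'.

(* Main.v *)
Require Import Defs.
From mathcomp Require Import all_boot.
From mathcomp Require Import boolp classical_sets cardinality.
Local Open Scope classical_set_scope.

Lemma fin_chain (T : Type) (D : set T) (F : set (set T)) (V : set T) :
  finite_set V -> total_on F subset -> V `<=` D `|` \bigcup_(X in F) X ->
  V `<=` D \/ exists2 X, F X & V `<=` D `|` X.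
Proof.
elim/Peq : T => T in D F V *.
move=> /finite_seqP [s ->] tot; elim: s => [|x s IH] H.
  by left => y /=; rewrite in_nil.
have Hs : [set` s] `<=` D `|` \bigcup_(X in F) X.
  by move=> y /= ys; apply: H => /=; rewrite in_cons ys orbT.
have Hx : (D `|` \bigcup_(X in F) X) x by apply: H => /=; rewrite in_cons eqxx.
case: (IH Hs) => [sD|[X1 FX1 sX1]].
- case: Hx => [xD|[X0 FX0 X0x]].
    by left => y /=; rewrite in_cons => /orP[/eqP ->//|ys]; exact: sD.
  right; exists X0 => // y /=; rewrite in_cons => /orP[/eqP ->|ys]; first by right.
  by left; exact: sD.
- case: Hx => [xD|[X0 FX0 X0x]].
    right; exists X1 => // y /=; rewrite in_cons => /orP[/eqP ->|ys]; first by left.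
    exact: sX1.
  case: (tot _ _ FX0 FX1) => [h01|h10].
    right; exists X1 => // y /=; rewrite in_cons => /orP[/eqP ->|ys].
      by right; apply: h01.
    exact: sX1.
  right; exists X0 => // y /=; rewrite in_cons => /orP[/eqP ->|ys]; first by right.
  by case: (sX1 _ ys) => [?|?]; [left|right; apply: h10].
Qed.

Lemma setDU1D (T : Type) (A : set T) (g : T) :
  ((A `\ g) `|` [set g]) `\ g = A `\ g.
Proof.
apply/seteqP; split => x /=.
  by case=> -[[Ax ng]|->] nx //.
by case=> Ax ng; split => //; left.
Qed.

Section S.
Variables (L : Type) (d : set L -> L -> Prop) (ctr : L -> set L) (S : set L).
Hypothesis d_fin : forall G g, d G g -> finite_set G.
Hypothesis Hcontra : contrapositable d ctr.

Lemma incons_of (A T' : set L) g g' : T' `<=` A -> T' g -> ctr g g' ->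
  d (T' `\ g) g' -> inconsistent d ctr A.
Proof. by move=> *; exists T', g, g'; split. Qed.

Lemma consistent_sub (A B : set L) : A `<=` B -> consistent d ctr B ->
  consistent d ctr A.
Proof.
move=> AB cB [T' [g [g' [TA Tg cg dg]]]]; apply: cB.
by apply: (@incons_of _ T' g g') => // x /TA /AB.
Qed.

Lemma attack_incons (G : set L) gm lam : d G gm -> ctr lam gm ->
  inconsistent d ctr (G `|` [set lam]).
Proof.
move=> dG cl.
have [G0|/set0P[s Gs]] := eqVneq G set0.
  rewrite G0 in dG *.
  apply: (@incons_of _ [set lam] lam gm) => //.
  have -> : [set lam] `\ lam = set0 by apply/seteqP; split=> x //= [].
  exact: dG.
have [s' cs ds'] := Hcontra _ _ _ (d_fin _ _ dG) dG cl _ Gs.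
by apply: (@incons_of _ (G `|` [set lam]) s s') => //; left.
Qed.

Lemma ex_MCS (D : set L) : consistent d ctr D -> D `<=` S ->
  exists2 M, MCS d ctr S M & D `<=` M.
Proof.
move=> cD DS.
pose P := [set X : set L | consistent d ctr (D `|` X) /\ D `|` X `<=` S].
have chainP : forall F, F `<=` P -> total_on F subset -> P (\bigcup_(X in F) X).
  move=> F FP tot; split.
  - move=> [T' [g [g' [TA Tg cg dg]]]].
    pose V := (T' `\ g) `|` [set g].
    have Vfin : finite_set V.
      by rewrite /V finite_setU; split; [exact: d_fin _ _ dg | exact: finite_set1].
    have VT : V `<=` D `|` \bigcup_(X in F) X.
      by move=> x [[Tx _]|->]; apply: TA.
    case: (@fin_chain _ D F V Vfin tot VT) => [VD|[X FX VX]].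
      apply: cD; apply: (@incons_of D V g g') => //; first by right.
      by rewrite /V setDU1D.
    case: (FP _ FX) => cX _; apply: cX.
    apply: (@incons_of _ V g g') => //; first by right.
    by rewrite /V setDU1D.
  - move=> x [Dx|[X FX Xx]]; first exact: DS.
    by case: (FP _ FX) => _ h; apply: h; right.
have [A [PA Amax]] := Zorn_bigcup chainP.
exists (D `|` A); last by move=> x Dx; left.
split; [exact: PA.2 | exact: PA.1 |].
move=> M' sub M'S cM'.
have eM : D `|` M' = M'.
  by apply/seteqP; split => x; [case=> // Dx; apply: sub; left | right].
have AM' : A `<=` M' by move=> x Ax; apply: sub; right.
have [M'A|nM'A] := pselect (M' `<=` A).
  by apply/seteqP; split => [x /M'A|]; [right|].
exfalso; apply: (Amax M'); first by split.
by rewrite /P /= eM; split.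
Qed.

End S.


Theorem lemma12 (L : Type) (d : set L -> L -> Prop) (ctr : L -> set L) (S : set L)
  (d_fin : forall G g, d G g -> finite_set G)
  (Hcontra : contrapositable d ctr) (Hcut : satisfies_cut d) :
  forall E, grounded_ext ctr (Arg (vdash_con d ctr) S) E <->
            E = Arg d (bigcap_MCS d ctr S).
Proof.
move=> E.
have exM := @ex_MCS L d ctr S d_fin.
have attI := @attack_incons L d ctr d_fin Hcontra.
have c0 : consistent d ctr set0.
  by move=> [T' [g [g' [T0 Tg _ _]]]]; exact: T0 _ Tg.
have [M0 M0mcs _] := exM set0 c0 (sub0set S).
have FM0 : bigcap_MCS d ctr S `<=` M0 by move=> x Fx; exact: Fx M0 M0mcs.
have FS : bigcap_MCS d ctr S `<=` S.
  by move=> x /FM0; case: M0mcs => h _ _; apply: h.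
have Fcons : forall T, T `<=` bigcap_MCS d ctr S -> consistent d ctr T.
  move=> T TF; case: M0mcs => _ cM0 _.
  exact: (@consistent_sub L d ctr _ _ (subset_trans TF FM0) cM0).
set F := bigcap_MCS d ctr S in FM0 FS Fcons *.
set A := Arg (vdash_con d ctr) S.
set G := Arg d F.
have GA : G `<=` A.
  move=> [Ga ga] [fin [sub dg]]; split => //; split.
    exact: subset_trans sub FS.
  by split => //; exact: Fcons.
have unatt : forall a b, G a -> A b -> ~ attacks ctr b a.
  move=> [Ga ga] [Db db] [_ [GF _]] [_ [DS [dD cD]]] [lam [Gl cl]] /=.
  simpl in *.
  have [M Mm DM] := exM Db cD DS.
  have Ml : M lam := GF _ Gl M Mm.
  case: Mm => _ cM _; apply: cM.
  have [T' [g [g' [TA Tg cg dg]]]] := attI _ _ _ dD cl.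
  apply: (@incons_of L d ctr M T' g g') => // x /TA [/DM|->] //.
have Gcomp : complete_ext ctr A G.
  split => //.
  - move=> a b Ga Gb; exact: unatt b a Gb (GA _ Ga).
  - move=> a Ga b Ab att; exfalso; exact: unatt a b Ga Ab att.
  move=> [Ga ga] [Gfin [GS [dg cg]]] def; split => //; split => //=.
  move=> lam Gl; apply: contrapT => nFl.
  have [M Mm nMl] : exists2 M, MCS d ctr S M & ~ M lam.
    apply: contrapT => h; apply: nFl => M Mm; apply: contrapT => nM.
    by apply: h; exists M.
  case: (Mm) => MS cM Mmax.
  have iMl : inconsistent d ctr (M `|` [set lam]).
    apply: contrapT => cMl.
    have MlS : M `|` [set lam] `<=` S by move=> x [/MS //|->]; exact: GS.
    have e := Mmax (M `|` [set lam]) (fun x Mx => or_introl Mx) MlS cMl.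
    have : (M `|` [set lam]) lam by right.
    by rewrite e.
  have [Th [lam' [ThM dTh cl']]] :
      exists Th lam', [/\ Th `<=` M, d Th lam' & ctr lam lam'].
    case: iMl => T' [g [g' [TA Tg cg' dg']]].
    have [Tl|nTl] := pselect (T' lam); last first.
      exfalso; apply: cM; apply: (@incons_of L d ctr M T' g g') => // x Tx.
      case: (TA _ Tx) => // xl; rewrite xl in Tx; contradiction.
    have [gl|ngl] := pselect (g = lam).
      subst g; exists (T' `\ lam), g'; split => //.
      move=> x [Tx nx]; case: (TA _ Tx) => // xl; contradiction.
    have [s' cs ds'] := Hcontra _ _ _ (d_fin _ _ dg') dg' cg' lam
      (conj Tl (fun e => ngl (esym e))).
    exists (((T' `\ g) `|` [set g]) `\ lam), s'; split => //.
    move=> x [[[Tx _]|xg] nx].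
      by case: (TA _ Tx) => // xl; contradiction.
    rewrite xg in nx *; case: (TA _ Tg) => // xl; contradiction.
  have Ab : A (Th, lam').
    split; first exact: d_fin _ _ dTh.
    split; first exact: subset_trans ThM MS.
    by split => //; exact: (@consistent_sub L d ctr _ _ ThM cM).
  have [c Gc catt] := def _ Ab (ex_intro _ lam (conj Gl cl')).
  case: c Gc catt => Dc dc [_ [DF dD]] [th [Thth cth]] /=.
  simpl in *.
  apply: cM; have [T' [g [g' [TA Tg cg' dg']]]] := attI _ _ _ dD cth.
  apply: (@incons_of L d ctr M T' g g') => // x /TA [/DF xF|->].
    exact: xF M Mm.
  exact: ThM.
have Gleast : forall E', complete_ext ctr A E' -> G `<=` E'.
  move=> E' [_ _ _ cl] a Ga; apply: cl (GA _ Ga) _ => b Ab att.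
  by exfalso; exact: unatt a b Ga Ab att.
split.
- by move=> [cE min]; apply/esym; exact: min Gcomp (Gleast _ cE).
- move=> ->; split => // E' cE' sub; apply/seteqP; split => //.
  exact: Gleast.
Qed.
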